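(* Let $n\ge4$. Let $U_n$ be the array obtained from $M_n$ by decreasing its $(2,2,2)$-entry by $1$ (all other entries unchanged). Then $U_n\in\mathcal C_n$, $U_n$ covers the minimum element $M_n$ in $(\mathcal C_n,\preceq)$ (so $U_n$ is join-irreducible), $\Xi^{-1}(U_n)_{2,2,2}=-1$, and hence $U_n\ne\Xi(H(L))$ for every Latin square $L\in\mathcal L_n$. Consequently $(\mathcal C_n,\preceq)$ is not the Dedekind–MacNeille completion of its subposet $\{\Xi(H(L)):L\in\mathcal L_n\}$.
   Context: Let $[n]=\{1,\dots,n\}$, $[0,n]=\{0,\dots,n\}$. A corner-sum hypermatrix of order $n$ is an integer array $C=(C_{i,j,k})_{i,j,k\in[0,n]}$ such that for all $i,j\in[0,n]$: $C_{i,j,0}=C_{i,0,j}=C_{0,i,j}=0$, $C_{i,j,n}=C_{i,n,j}=C_{n,i,j}=ij$, and for all $k\in[n]$ each of $C_{i,j,k}-C_{i,j,k-1}$, $C_{i,k,j}-C_{i,k-1,j}$, $C_{k,i,j}-C_{k-1,i,j}$ is an integer in $\{\max(0,i+j-n),\dots,\min(i,j)\}$. $\mathcal C_n$ is the set of these, ordered by $C\preceq D$ iff $C\ge D$ entrywise; its minimum is $M_n$ with $(M_n)_{i,j,k}=\min(k\min(i,j),\,ij-(n-k)\max(0,i+j-n))$. A Latin square of order $n$ is an $n\times n$ array over $[n]$ with each symbol once in each row and column; $\mathcal L_n$ is the set of them; $H(L)_{i,j,k}=1$ if $L_{i,j}=k$, else $0$. $\Xi(A)_{i,j,k}=\sum_{a\le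 i,b\le j,c\le k}A_{a,b,c}$ for $i,j,k\in[0,n]$, and $\Xi^{-1}(C)_{i,j,k}=C_{i,j,k}-C_{i-1,j,k}-C_{i,j-1,k}-C_{i,j,k-1}+C_{i-1,j-1,k}+C_{i-1,j,k-1}+C_{i,j-1,k-1}-C_{i-1,j-1,k-1}$ for $i,j,k\in[n]$. *)

(* Defs.v *)
From mathcomp Require Import all_boot all_order all_algebra.
Set Implicit Arguments. Unset Strict Implicit. Unset Printing Implicit Defensive.
Import Order.TTheory GRing.Theory Num.Theory.
Local Open Scope ring_scope.

(* Integer arrays indexed by [0,n]^3 (ordinals 'I_n.+1 represent 0..n). *)
Definition arr (n : nat) := {ffun 'I_n.+1 * 'I_n.+1 * 'I_n.+1 -> int}.

(* Entry access with natural-number indices (0 outside [0,n]^3; never used there). *)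
Definition ent (n : nat) (C : arr n) (i j k : nat) : int :=
  if [&& (i <= n)%N, (j <= n)%N & (k <= n)%N]
  then C (inord i, inord j, inord k) else 0.

Definition mk_arr (n : nat) (f : nat -> nat -> nat -> int) : arr n :=
  [ffun t => f (nat_of_ord t.1.1) (nat_of_ord t.1.2) (nat_of_ord t.2)].

(* x lies in {max(0,i+j-n), ..., min(i,j)} ; max(0,i+j-n) = truncated (i+j-n)%N *)
Definition in_bounds (n i j : nat) (x : int) : Prop :=
  ((i + j - n)%N%:Z <= x) /\ (x <= (minn i j)%:Z).

Definition is_csh (n : nat) (C : arr n) : Prop :=
  forall i j : nat, (i <= n)%N -> (j <= n)%N ->
    [/\ [/\ ent C i j 0 = 0, ent C i 0 j = 0 & ent C 0 i j = 0],
        [/\ ent C i j n = (i * j)%N%:Z, ent C i n j = (i * j)%N%:Z &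
             ent C n i j = (i * j)%N%:Z] &
        forall k : nat, (0 < k)%N -> (k <= n)%N ->
          [/\ in_bounds n i j (ent C i j k - ent C i j k.-1),
              in_bounds n i j (ent C i k j - ent C i k.-1 j) &
              in_bounds n i j (ent C k i j - ent C k.-1 i j)]].

Definition preceq (n : nat) (C D : arr n) : Prop := forall t, D t <= C t.

Definition Mn (n : nat) : arr n :=
  mk_arr n (fun i j k =>
    Order.min ((k * minn i j)%N%:Z) ((i * j)%N%:Z - ((n - k) * (i + j - n))%N%:Z)).

Definition Un (n : nat) : arr n :=
  mk_arr n (fun i j k =>
    ent (Mn n) i j k - (if [&& i == 2%N, j == 2%N & k == 2%N] then 1 else 0)).

Definition covers (n : nat) (C D : arr n) : Prop :=
  [/\ is_csh C, is_csh D, preceq C D, C <> D &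
      forall E : arr n, is_csh E -> preceq C E -> preceq E D -> E = C \/ E = D].

Definition is_lub2 (n : nat) (A B X : arr n) : Prop :=
  [/\ is_csh X, preceq A X, preceq B X &
      forall Y : arr n, is_csh Y -> preceq A Y -> preceq B Y -> preceq X Y].

Definition join_irreducible (n : nat) (X : arr n) : Prop :=
  [/\ is_csh X,
      exists Y : arr n, is_csh Y /\ ~ preceq X Y &
      forall A B : arr n, is_csh A -> is_csh B -> is_lub2 A B X -> A = X \/ B = X].

Definition Xiinv (n : nat) (C : arr n) (i j k : nat) : int :=
  ent C i j k - ent C i.-1 j k - ent C i j.-1 k - ent C i j k.-1
  + ent C i.-1 j.-1 k + ent C i.-1 j k.-1 + ent C i j.-1 k.-1
  - ent C i.-1 j.-1 k.-1.

(* Latin squares of order n: L (i-1, j-1) = k-1 encodes L_{i,j} = k with i,j,k in [n]. *)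
Definition latin (n : nat) := {ffun 'I_n * 'I_n -> 'I_n}.

Definition is_latin (n : nat) (L : latin n) : Prop :=
  (forall (i k : 'I_n), #|[set j : 'I_n | L (i, j) == k]| = 1%N) /\
  (forall (j k : 'I_n), #|[set i : 'I_n | L (i, j) == k]| = 1%N).

(* H(L) with 0-based ordinal indices: H(L)_{a+1,b+1,c+1} = Hent L a b c. *)
Definition Hent (n : nat) (L : latin n) (a b c : 'I_n) : int :=
  if L (a, b) == c then 1 else 0.

(* Xi(H(L)) as an array on [0,n]^3: entry (i,j,k) = sum over 1-based a<=i, b<=j, c<=k,
   i.e. over 0-based ordinals a < i, b < j, c < k. *)
Definition XiH (n : nat) (L : latin n) : arr n :=
  mk_arr n (fun i j k =>
    \sum_(a : 'I_n | (a < i)%N) \sum_(b : 'I_n | (b < j)%N)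
      \sum_(c : 'I_n | (c < k)%N) Hent L a b c).

Definition upper_in (T : Type) (le : T -> T -> Prop) (S A : T -> Prop) : T -> Prop :=
  fun s => S s /\ forall a, A a -> le a s.
Definition lower_in (T : Type) (le : T -> T -> Prop) (S A : T -> Prop) : T -> Prop :=
  fun s => S s /\ forall a, A a -> le s a.
Definition is_cut (T : Type) (le : T -> T -> Prop) (S A : T -> Prop) : Prop :=
  (forall a, A a -> S a) /\
  (forall s, A s <-> lower_in le S (upper_in le S A) s).

(* (P, le) is the Dedekind–MacNeille completion of its subposet S: there is an
   order isomorphism phi from P onto the lattice of cuts of S (ordered by
   inclusion) sending each s in S to its principal cut {t in S | t <= s}. *)
Definition is_DM_completion (T : Type) (P : T -> Prop) (le : T -> T -> Prop)
    (S : T -> Prop) : Prop :=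
  exists phi : T -> T -> Prop,
    [/\ forall x, P x -> is_cut le S (phi x),
        forall x y, P x -> P y -> (le x y <-> forall s, phi x s -> phi y s),
        forall A, is_cut le S A -> exists x, P x /\ forall s, phi x s <-> A s &
        forall s, S s -> forall t, phi s t <-> (S t /\ le t s)].

(* Main.v *)
Require Import Defs.
From mathcomp Require Import all_boot all_order all_algebra.
From mathcomp Require Import zify.
From Stdlib Require Import Classical_Prop.
Import Order.TTheory GRing.Theory Num.Theory.
Local Open Scope ring_scope.

Lemma ent_mk n f i j k : (i <= n)%N -> (j <= n)%N -> (k <= n)%N ->
  ent (mk_arr n f) i j k = f i j k.
Proof.
move=> hi hj hk; rewrite /ent hi hj hk /= /mk_arr ffunE /= !inordK //.
Qed.

Definition Mf (n i j k : nat) : int :=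
  Order.min ((k * minn i j)%N%:Z) ((i * j)%N%:Z - ((n - k) * (i + j - n))%N%:Z).

Definition G (n i j k : nat) : int :=
  Order.min (Order.min (Order.min (i * j)%N%:Z (i * k)%N%:Z) (j * k)%N%:Z)
    ((i * j + i * k + j * k + n * n)%N%:Z - (n * (i + j + k))%N%:Z).

Lemma Mf_G n i j k : (i <= n)%N -> (j <= n)%N -> (k <= n)%N -> Mf n i j k = G n i j k.
Proof.
move=> hi hj hk; rewrite /Mf /G.
case: (leqP i j) => hij.
  case: (leqP (i + j) n) => hs.
    have -> : (i + j - n = 0)%N by lia.
    nia.
  nia.
case: (leqP (i + j) n) => hs.
  have -> : (i + j - n = 0)%N by lia.
  nia.
nia.
Qed.

Lemma Mf_inc n i j k : (i <= n)%N -> (j <= n)%N -> (0 < k)%N -> (k <= n)%N ->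
  in_bounds n i j (Mf n i j k - Mf n i j k.-1).
Proof.
move=> hi hj; case: k => // k _ hk /=; rewrite /in_bounds /Mf.
have e1 : (k.+1 * minn i j = k * minn i j + minn i j)%N by rewrite mulSn addnC.
have e2 : ((n - k) * (i + j - n) = (n - k.+1) * (i + j - n) + (i + j - n))%N.
  have -> : (n - k = (n - k.+1).+1)%N by lia.
  by rewrite mulSn addnC.
have e3 : (i + j - n <= minn i j)%N by lia.
have e4 : ((n - k.+1) * (i + j - n) <= i * j)%N.
  have : (n - k.+1 <= n)%N by lia.
  nia.
have e5 : ((n - k) * (i + j - n) <= i * j)%N by nia.
lia.
Qed.
Section Sums.
Variable n : nat.

Lemma sum_ltS (F : 'I_n -> int) i (hi : (i < n)%N) :
  \sum_(a : 'I_n | (a < i.+1)%N) F a = \sum_(a : 'I_n | (a < i)%N) F a + F (Ordinal hi).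
Proof.
rewrite (bigD1 (Ordinal hi)) //=.
rewrite addrC; congr (_ + _); apply: eq_bigl => a.
rewrite -val_eqE /= ltnS; lia.
Qed.

Lemma sum_lt0 (F : 'I_n -> int) : \sum_(a : 'I_n | (a < 0)%N) F a = 0.
Proof. by rewrite big_pred0. Qed.

Lemma sum_ltn (F : 'I_n -> int) : \sum_(a : 'I_n | (a < n)%N) F a = \sum_a F a.
Proof. by apply: eq_bigl => a; rewrite ltn_ord. Qed.

Lemma sum_const_lt (x : int) i : (i <= n)%N ->
  \sum_(a : 'I_n | (a < i)%N) x = x * i%:Z.
Proof.
elim: i => [|i IH] hi; first by rewrite sum_lt0 mulr0.
rewrite sum_ltS // IH; last by lia.
by rewrite -[in RHS](addn1 i) PoszD mulrDr mulr1.
Qed.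

Lemma sum_inc (F : 'I_n -> int) k (hk : (k < n)%N) :
  \sum_(a : 'I_n | (a < k.+1)%N) F a - \sum_(a : 'I_n | (a < k)%N) F a = F (Ordinal hk).
Proof.
by rewrite sum_ltS addrC addKr.
Qed.

Lemma sum_le_all (F : 'I_n -> int) j : (forall a, 0 <= F a) ->
  \sum_(a : 'I_n | (a < j)%N) F a <= \sum_a F a.
Proof.
move=> h; rewrite [X in _ <= X](bigID (fun a : 'I_n => (a < j)%N)) /=.
by rewrite lerDl sumr_ge0.
Qed.

Lemma sum_all_split (F : 'I_n -> int) j :
  \sum_a F a = \sum_(a : 'I_n | (a < j)%N) F a + \sum_(a : 'I_n | ~~ (a < j)%N) F a.
Proof. by rewrite (bigID (fun a : 'I_n => (a < j)%N)). Qed.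

Lemma card_ge j : (j <= n)%N -> \sum_(a : 'I_n | ~~ (a < j)%N) (1 : int) = (n - j)%N%:Z.
Proof.
move=> hj; have := sum_all_split (fun _ => 1) j.
rewrite -sum_ltn !sum_const_lt // !mul1r => e.
have -> : (n - j)%N%:Z = n%:Z - j%:Z by rewrite subzn.
rewrite e; lia.
Qed.

Lemma PM (P : 'I_n -> 'I_n -> int) i j :
  (forall a b, 0 <= P a b) -> (forall a, \sum_b P a b = 1) -> (forall b, \sum_a P a b = 1) ->
  (i <= n)%N -> (j <= n)%N ->
  in_bounds n i j (\sum_(a : 'I_n | (a < i)%N) \sum_(b : 'I_n | (b < j)%N) P a b).
Proof.
move=> h0 hr hc hi hj; split; last first.
  have u1 : \sum_(a : 'I_n | (a < i)%N) \sum_(b : 'I_n | (b < j)%N) P a b <= i%:Z.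
    rewrite -[X in _ <= X]mul1r -(sum_const_lt 1 i hi).
    apply: ler_sum => a _; rewrite -(hr a); exact: sum_le_all.
  have u2 : \sum_(a : 'I_n | (a < i)%N) \sum_(b : 'I_n | (b < j)%N) P a b <= j%:Z.
    rewrite exchange_big /=.
    rewrite -[X in _ <= X]mul1r -(sum_const_lt 1 j hj).
    apply: ler_sum => b _; rewrite -(hc b); apply: sum_le_all => a; exact: h0.
  lia.
have e : \sum_(a : 'I_n | (a < i)%N) \sum_(b : 'I_n | (b < j)%N) P a b =
   \sum_(a : 'I_n | (a < i)%N) 1 - \sum_(b : 'I_n | ~~ (b < j)%N) \sum_(a : 'I_n | (a < i)%N) P a b.
  rewrite [X in _ = _ - X]exchange_big /= -sumrB; apply: eq_bigr => a _.
  by rewrite -(hr a) (sum_all_split _ j) addrK.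
have l : \sum_(b : 'I_n | ~~ (b < j)%N) \sum_(a : 'I_n | (a < i)%N) P a b <= (n - j)%N%:Z.
  rewrite -card_ge //; apply: ler_sum => b _; rewrite -(hc b).
  apply: sum_le_all => a; exact: h0.
have z : 0 <= \sum_(a : 'I_n | (a < i)%N) \sum_(b : 'I_n | (b < j)%N) P a b.
  by apply: sumr_ge0 => a _; apply: sumr_ge0 => b _.
move: z; rewrite e sum_const_lt // mul1r => z.
lia.
Qed.
End Sums.
Lemma Hent_ge0 n (L : latin n) a b c : 0 <= Hent L a b c.
Proof. by rewrite /Hent; case: ifP. Qed.

Lemma hsum_c n (L : latin n) a b : \sum_c Hent L a b c = 1.
Proof.
rewrite (bigD1 (L (a, b))) //= /Hent eqxx big1 ?addr0 // => c hc.
by rewrite eq_sym (negbTE hc).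
Qed.

Lemma sum_card n (p : pred 'I_n) : \sum_b (if p b then 1 else 0 : int) = #|p|%:Z.
Proof. by rewrite -big_mkcond /= sumr_const natz. Qed.

Lemma hsum_b n (L : latin n) (hL : is_latin L) a c : \sum_b Hent L a b c = 1.
Proof.
rewrite /Hent (@sum_card _ (fun b => L (a, b) == c)).
by have := hL.1 a c; rewrite cardsE => ->.
Qed.

Lemma hsum_a n (L : latin n) (hL : is_latin L) b c : \sum_a Hent L a b c = 1.
Proof.
rewrite /Hent (@sum_card _ (fun a => L (a, b) == c)).
by have := hL.2 b c; rewrite cardsE => ->.
Qed.

Lemma XiH_csh n (L : latin n) (hL : is_latin L) : is_csh (XiH L).
Proof.
move=> i j hi hj; split.
- rewrite !ent_mk //; split.
  + by rewrite big1 // => a _; rewrite big1 // => b _; exact: sum_lt0.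
  + by rewrite big1 // => a _; exact: sum_lt0.
  + exact: sum_lt0.
- rewrite !ent_mk //; split.
  + under eq_bigr => a _ do under eq_bigr => b _ do rewrite sum_ltn hsum_c.
    under eq_bigr => a _ do rewrite sum_const_lt //.
    rewrite sum_const_lt // PoszM; lia.
  + under eq_bigr => a _ do rewrite sum_ltn exchange_big /=.
    under eq_bigr => a _ do under eq_bigr => c _ do rewrite hsum_b //.
    under eq_bigr => a _ do rewrite sum_const_lt //.
    rewrite sum_const_lt // PoszM; lia.
  + rewrite sum_ltn exchange_big /=.
    under eq_bigr => b _ do rewrite exchange_big /=.
    under eq_bigr => b _ do under eq_bigr => c _ do rewrite hsum_a //.
    under eq_bigr => a _ do rewrite sum_const_lt //.
    rewrite sum_const_lt // PoszM; lia.
- case=> // k _ hk; have hk' : (k < n)%N by [].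
  have hk2 : (k <= n)%N by lia.
  rewrite !ent_mk //= /XiH; split.
  + rewrite -sumrB.
    under eq_bigr => a _ do rewrite -sumrB.
    under eq_bigr => a _ do under eq_bigr => b _ do rewrite sum_inc.
    apply: PM => //.
    * by move=> a b; exact: Hent_ge0.
    * by move=> a; exact: hsum_b.
    * by move=> b; exact: hsum_a.
  + rewrite -sumrB.
    under eq_bigr => a _ do rewrite sum_inc.
    apply: PM => //.
    * by move=> a b; exact: Hent_ge0.
    * by move=> a; exact: hsum_c.
    * by move=> b; exact: hsum_a.
  + rewrite sum_inc.
    apply: PM => //.
    * by move=> a b; exact: Hent_ge0.
    * by move=> a; exact: hsum_c.
    * by move=> b; exact: hsum_b.
Qed.

Lemma G_sym1 n i j k : G n i j k = G n j i k.
Proof. rewrite /G. have := mulnC i j. have := mulnC i k. have := mulnC j k.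
have := mulnDr n (i+j) k. have := mulnDr n i j. have := mulnDr n j i. have := mulnDr n (j + i) k. lia. Qed.
Lemma G_sym2 n i j k : G n i j k = G n i k j.
Proof. rewrite /G. have := mulnC i j. have := mulnC i k. have := mulnC j k.
have := mulnDr n (i+j) k. have := mulnDr n i j. have := mulnDr n i k. have := mulnDr n (i + k) j. lia. Qed.

Lemma key n i j : (i <= n)%N -> (j <= n)%N -> (n * (i + j) <= i * j + n * n)%N.
Proof. move=> hi hj. nia. Qed.
Lemma b1 n i j : (i <= n)%N -> (j <= n)%N -> G n i j 0 = 0.
Proof. move=> hi hj; have := key _ _ _ hi hj; rewrite /G. lia. Qed.
Lemma b2 n i j : (i <= n)%N -> (j <= n)%N -> G n i 0 j = 0.
Proof. move=> hi hj; have := key _ _ _ hi hj; rewrite /G; have := mulnC i j. lia. Qed.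
Lemma b3 n i j : (i <= n)%N -> (j <= n)%N -> G n 0 i j = 0.
Proof. move=> hi hj; have := key _ _ _ hi hj; rewrite /G; have := mulnC i j. lia. Qed.
Lemma b4 n i j : (i <= n)%N -> (j <= n)%N -> G n i j n = (i * j)%N%:Z.
Proof. move=> hi hj; have := leq_mul (leqnn i) hj; have := leq_mul hi (leqnn j); rewrite /G. have := mulnDr n (i+j) n. have := mulnDr n i j. have := mulnC i n. have := mulnC j n. lia. Qed.
Lemma b5 n i j : (i <= n)%N -> (j <= n)%N -> G n i n j = (i * j)%N%:Z.
Proof. by move=> hi hj; rewrite -G_sym2 b4. Qed.
Lemma b6 n i j : (i <= n)%N -> (j <= n)%N -> G n n i j = (i * j)%N%:Z.
Proof. by move=> hi hj; rewrite G_sym1 -G_sym2 b4. Qed.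

Lemma Mf_sym2 n i j k : (i <= n)%N -> (j <= n)%N -> (k <= n)%N -> Mf n i k j = Mf n i j k.
Proof. by move=> *; rewrite !Mf_G // G_sym2. Qed.
Lemma Mf_sym3 n i j k : (i <= n)%N -> (j <= n)%N -> (k <= n)%N -> Mf n k i j = Mf n i j k.
Proof. by move=> *; rewrite !Mf_G // G_sym1 G_sym2. Qed.

Lemma entM n i j k : (i <= n)%N -> (j <= n)%N -> (k <= n)%N -> ent (Mn n) i j k = Mf n i j k.
Proof. exact: ent_mk. Qed.

Lemma Mf_bd n i j : (i <= n)%N -> (j <= n)%N ->
  [/\ Mf n i j 0 = 0, Mf n i 0 j = 0 & Mf n 0 i j = 0] /\ [/\ Mf n i j n = (i * j)%N%:Z,
      Mf n i n j = (i * j)%N%:Z & Mf n n i j = (i * j)%N%:Z].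
Proof.
move=> hi hj; rewrite !Mf_G //; rewrite b1 ?b2 ?b3 ?b4 ?b5 ?b6 //.
Qed.

Lemma Mn_csh n : is_csh (Mn n).
Proof.
move=> i j hi hj; have [[b1 b2 b3] [b4 b5 b6]] := @Mf_bd n i j hi hj.
split; first by rewrite !entM.
  by rewrite !entM.
move=> k k0 kn; have kn' : (k.-1 <= n)%N by lia.
rewrite !entM // (Mf_sym2 n i j k) // (Mf_sym2 n i j k.-1) // (Mf_sym3 n i j k) // (Mf_sym3 n i j k.-1) //.
split; exact: Mf_inc.
Qed.

Definition delta (i j k : nat) : int := if [&& i == 2%N, j == 2%N & k == 2%N] then 1 else 0.

Lemma entU n i j k : (i <= n)%N -> (j <= n)%N -> (k <= n)%N ->
  ent (Un n) i j k = Mf n i j k - delta i j k.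
Proof. by move=> hi hj hk; rewrite /Un ent_mk // entM. Qed.

Lemma entU2 n i j k : (i <= n)%N -> (j <= n)%N -> (k <= n)%N ->
  ent (Un n) i k j = Mf n i j k - delta i j k.
Proof.
move=> hi hj hk; rewrite entU // Mf_sym2 // /delta.
by case: (i == 2%N); case: (j == 2%N); case: (k == 2%N).
Qed.

Lemma entU3 n i j k : (i <= n)%N -> (j <= n)%N -> (k <= n)%N ->
  ent (Un n) k i j = Mf n i j k - delta i j k.
Proof.
move=> hi hj hk; rewrite entU // Mf_sym3 // /delta.
by case: (i == 2%N); case: (j == 2%N); case: (k == 2%N).
Qed.

Lemma Mf22 n k : (4 <= n)%N -> Mf n 2 2 k = Order.min (k * 2)%N%:Z 4.
Proof.
move=> hn; rewrite /Mf; have -> : (2 + 2 - n = 0)%N by lia.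
by rewrite muln0 subr0.
Qed.

Lemma incU n i j k : (4 <= n)%N -> (i <= n)%N -> (j <= n)%N -> (0 < k)%N -> (k <= n)%N ->
  in_bounds n i j ((Mf n i j k - delta i j k) - (Mf n i j k.-1 - delta i j k.-1)).
Proof.
move=> hn hi hj k0 kn.
case h: ((i == 2%N) && (j == 2%N)).
  move/andP: h => [/eqP -> /eqP ->]; rewrite !Mf22 // /delta /in_bounds.
  have -> : (2 + 2 - n = 0)%N by lia.
  case: k k0 kn => [|[|[|[|k]]]] //= _ _; lia.
have -> : delta i j k = 0 by rewrite /delta; case: (i == 2%N) h => //= ->.
have -> : delta i j k.-1 = 0 by rewrite /delta; case: (i == 2%N) h => //= ->.
rewrite !subr0; exact: Mf_inc.
Qed.

Lemma Un_csh n : (4 <= n)%N -> is_csh (Un n).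
Proof.
move=> hn i j hi hj; have [[b1 b2 b3] [b4 b5 b6]] := @Mf_bd n i j hi hj.
have d0 : forall a b, delta a b 0 = 0 by move=> a b; rewrite /delta /= !andbF.
have dn : forall a b, delta a b n = 0.
  move=> a b; rewrite /delta (_ : (n == 2%N) = false) ?andbF //; apply/negbTE/eqP; lia.
have hn0 : (0 <= n)%N by [].
split.
- by rewrite entU // entU2 // entU3 // b1 d0 subr0.
- by rewrite entU // entU2 // entU3 // b4 dn subr0.
move=> k k0 kn; have kn' : (k.-1 <= n)%N by lia.
rewrite (entU n i j k) // (entU n i j k.-1) // (entU2 n i j k) // (entU2 n i j k.-1) // (entU3 n i j k) // (entU3 n i j k.-1) //.
split; exact: incU.
Qed.

Lemma ent_val n (C : arr n) (a b c : 'I_n.+1) : ent C a b c = C (a, b, c).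
Proof. by rewrite /ent !leq_ord /= !inord_val. Qed.

Lemma csh_le_Mf n (A : arr n) i j k : is_csh A -> (i <= n)%N -> (j <= n)%N -> (k <= n)%N ->
  ent A i j k <= Mf n i j k.
Proof.
move=> hA hi hj hk.
have [[z1 _ _] [t1 _ _] hinc] := hA i j hi hj.
have up1 : forall k, (k <= n)%N -> ent A i j k <= (k * minn i j)%N%:Z.
  elim=> [|l IH] hl; first by rewrite z1.
  have [[_ u] _ _] := hinc l.+1 isT hl.
  have := IH (ltnW hl); move: u => /=; rewrite mulSn; lia.
have up2 : forall m, (m <= n)%N -> ent A i j (n - m) <= (i * j)%N%:Z - (m * (i + j - n))%N%:Z.
  elim=> [|m IH] hm; first by rewrite subn0 t1 mul0n subr0.
  have e : (n - m = (n - m.+1).+1)%N by lia.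
  have [[u _] _ _] := hinc (n - m)%N ltac:(lia) ltac:(lia).
  have := IH (ltnW hm); move: u; rewrite e /= mulSn; lia.
have := up1 k hk; have := up2 (n - k)%N ltac:(lia); rewrite subKn // /Mf; lia.
Qed.

Lemma csh_le_M n (A : arr n) : is_csh A -> forall t, A t <= Mn n t.
Proof.
move=> hA [[a b] c]; rewrite -ent_val -(ent_val _ (Mn n)) entM ?leq_ord //.
apply: csh_le_Mf; rewrite ?leq_ord //.
Qed.


Lemma Un_val n (a b c : 'I_n.+1) : Un n (a, b, c) = Mn n (a, b, c) - delta a b c.
Proof. by rewrite /Un /mk_arr ffunE /= ent_val. Qed.

Definition t0 n : 'I_n.+1 * 'I_n.+1 * 'I_n.+1 := (inord 2, inord 2, inord 2).

Lemma delta_t0 n (a b c : 'I_n.+1) : (2 <= n)%N ->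
  delta a b c = if (a, b, c) == t0 n then 1 else 0.
Proof.
move=> h2; rewrite /delta /t0.
have e : forall x : 'I_n.+1, (x == inord 2 :> 'I_n.+1) = (x == 2%N :> nat).
  by move=> x; rewrite -val_eqE /= inordK.
by rewrite !xpair_eqE !e andbA.
Qed.

Lemma Un_t0 n : (2 <= n)%N -> Un n (t0 n) = Mn n (t0 n) - 1.
Proof. by move=> h; rewrite /t0 Un_val delta_t0 // eqxx. Qed.

Lemma Un_nt0 n t : (2 <= n)%N -> t != t0 n -> Un n t = Mn n t.
Proof.
by move: t => [[a b] c] h ht; rewrite Un_val delta_t0 // (negbTE ht) subr0.
Qed.

Lemma between n (E : arr n) : (4 <= n)%N -> is_csh E -> (forall t, Un n t <= E t) ->
  E = Mn n \/ E = Un n.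
Proof.
move=> hn hE hU; have h2 : (2 <= n)%N by lia.
have hM := @csh_le_M n E hE.
have eq_off : forall t, t != t0 n -> E t = Mn n t.
  move=> t ht; have := hM t; have := hU t; rewrite Un_nt0 //; lia.
case: (boolP (E (t0 n) == Mn n (t0 n))) => [/eqP he | hne].
  left; apply/ffunP => t; case: (eqVneq t (t0 n)) => [->|ht]; first exact: he.
  exact: eq_off.
right; apply/ffunP => t; case: (eqVneq t (t0 n)) => [->|ht]; last by rewrite eq_off // Un_nt0.
have := hM (t0 n); have := hU (t0 n); rewrite Un_t0 //; move: hne => /eqP; set x := E (t0 n); set y := Mn n (t0 n); lia.
Qed.

Lemma M_neq_U n : (2 <= n)%N -> Mn n <> Un n.
Proof.
move=> h e; have := Un_t0 n h; rewrite -e => /eqP; rewrite -subr_eq0 opprB addrC subrK //.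
Qed.


Lemma Mf_small n i j k : (i + j <= n)%N -> Mf n i j k = Order.min (k * minn i j)%N%:Z (i * j)%N%:Z.
Proof.
move=> h; rewrite /Mf; have -> : (i + j - n = 0)%N by lia.
by rewrite muln0 subr0.
Qed.

Lemma Xiinv_U n : (4 <= n)%N -> Xiinv (Un n) 2 2 2 = -1.
Proof.
move=> hn; have h1 : (1 <= n)%N by lia. have h2 : (2 <= n)%N by lia.
have h3 : (3 <= n)%N by lia.
rewrite /Xiinv /= !entU // !Mf_small // /delta /=.
Qed.

Section S.
Variable n : nat.
Lemma sum_lt1 (h0 : (0 < n)%N) (F : 'I_n -> int) :
  \sum_(a : 'I_n | (a < 1)%N) F a = F (Ordinal h0).
Proof. by rewrite (sum_ltS _ _ _ h0) sum_lt0 add0r. Qed.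
Lemma sum_lt2 (h0 : (0 < n)%N) (h1 : (1 < n)%N) (F : 'I_n -> int) :
  \sum_(a : 'I_n | (a < 2)%N) F a = F (Ordinal h0) + F (Ordinal h1).
Proof. by rewrite (sum_ltS _ _ _ h1) sum_lt1. Qed.
End S.

Lemma Xiinv_XiH n (L : latin n) : (4 <= n)%N -> 0 <= Xiinv (XiH L) 2 2 2.
Proof.
move=> hn; have h1 : (1 <= n)%N by lia. have h2 : (2 <= n)%N by lia.
have h0 : (0 < n)%N by lia. have h1' : (1 < n)%N by lia.
rewrite /Xiinv /= !ent_mk //.
do 4 rewrite ?(sum_lt2 _ h0 h1') ?(sum_lt1 _ h0).
set o0 := Ordinal h0; set o1 := Ordinal h1'.
have := Hent_ge0 _ L o1 o1 o1.
lia.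
Qed.


Theorem mainTheorem16 (n : nat) (hn : (4 <= n)%N) :
  [/\ [/\ is_csh (Un n),
          covers (Mn n) (Un n) &
          join_irreducible (Un n)],
      Xiinv (Un n) 2 2 2 = -1,
      forall L : latin n, is_latin L -> Un n <> XiH L &
      ~ is_DM_completion (@is_csh n) (@preceq n)
          (fun C : arr n => exists L : latin n, is_latin L /\ C = XiH L)].
Proof.
have h2 : (2 <= n)%N by lia.
have cU := Un_csh n hn.
have cM := Mn_csh n.
have neqU : forall L, is_latin L -> Un n <> XiH L.
  by move=> L hL e; have := Xiinv_XiH n L hn; rewrite -e Xiinv_U.
have hMU : preceq (Mn n) (Un n) by move=> t; exact: (csh_le_M n (Un n) cU t).
have nUM : ~ preceq (Un n) (Mn n).
  move/(_ (t0 n)); rewrite Un_t0 //; set x := Mn n (t0 n); lia.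
have prefl : forall C : arr n, preceq C C by move=> C t; exact: lexx.
have ptrans : forall A B C : arr n, preceq A B -> preceq B C -> preceq A C.
  by move=> A B C hab hbc t; exact: le_trans (hbc t) (hab t).
split.
- split => //.
  + split => //; first exact: M_neq_U.
    by move=> E hE _ hEU; exact: between.
  + split => //; first by exists (Mn n).
    move=> A B hA hB [_ hAX hBX hlub].
    case: (between n A hn hA hAX) => eA; last by left.
    case: (between n B hn hB hBX) => eB; last by right.
    exfalso; apply: nUM; apply: hlub => //; rewrite ?eA ?eB //.
- exact: Xiinv_U.
- exact: neqU.
move=> [phi [H1 H2 H3 H4]].
have [s [hs1 hs2]] : exists s, phi (Un n) s /\ ~ phi (Mn n) s.
  apply: NNPP => hno; apply: nUM; apply/(H2 _ _ cU cM) => s hs.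
  apply: NNPP => hns; apply: hno; exists s; split => //.
have [hS hcutU] := H1 _ cU.
have Ss := hS s hs1.
have [L [hL eL]] := Ss.
pose S := fun C : arr n => exists L : latin n, is_latin L /\ C = XiH L.
pose A := fun t => S t /\ preceq t s.
have cutA : is_cut (@preceq n) S A.
  split; first by move=> a [].
  move=> t; split.
  * move=> [St hts]; split => // u [Su hu]; exact: hu t (conj St hts).
  * move=> [St hup]; split => //; apply: hup; split => // a [_ ha]; exact: ha.
have [y [Py hy]] := H3 A cutA.
have hyU : preceq y (Un n).
  apply/(H2 _ _ Py cU) => t /hy [St hts].
  apply/hcutU; split => // u [Su hu].
  exact: ptrans (hu s hs1).
case: (between n y hn Py hyU) => ey.
  by apply: hs2; rewrite -ey; apply/hy; split.
have Ps : is_csh s by rewrite eL; exact: XiH_csh.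
have e1 : preceq s (Un n).
  apply/(H2 _ _ Ps cU) => t /(H4 s Ss t) ht; rewrite -ey; exact/hy.
have e2 : preceq (Un n) s.
  apply/(H2 _ _ cU Ps) => t; rewrite -ey => /hy ht; exact/(H4 s Ss t).
apply: (neqU L hL); rewrite -eL; apply/ffunP => t; apply/le_anti.
by rewrite e1 e2.
Qed.
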